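(* Let $R \subseteq S$ be an extension of commutative rings, and let $R^*$ be the strict closure of $R$ in $S$. Then $R^* \subseteq R + MS$ (inside $S$) for every maximal ideal $M$ of $R$.
   Context: For an extension of commutative rings $R \subseteq S$, the strict closure of $R$ in $S$ is $R^* = \{\alpha \in S \mid \alpha\otimes 1 = 1\otimes \alpha \text{ in } S\otimes_R S\}$; it is a subring of $S$ containing $R$. *)

(* Defs.v *)
From mathcomp Require Import all_boot all_order all_algebra.
Set Implicit Arguments. Unset Strict Implicit. Unset Printing Implicit Defensive.
Import Order.TTheory GRing.Theory Num.Theory.
Local Open Scope ring_scope.

Section Defs.
Variable S : comPzRingType.

Record is_subring (R : S -> Prop) : Prop := {
  subring1 : R 1;
  subringB : forall x y, R x -> R y -> R (x - y);
  subringM : forall x y, R x -> R y -> R (x * y) }.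

Record is_ideal_of (R M : S -> Prop) : Prop := {
  ideal_sub : forall x, M x -> R x;
  ideal0 : M 0;
  idealD : forall x y, M x -> M y -> M (x + y);
  idealN : forall x, M x -> M (- x);
  idealMl : forall r x, R r -> M x -> M (r * x) }.

Definition is_maximal_ideal_of (R M : S -> Prop) : Prop :=
  [/\ is_ideal_of R M, ~ M 1 &
      forall J : S -> Prop, is_ideal_of R J -> (forall x, M x -> J x) ->
        (forall x, J x -> M x) \/ J 1].

(* MS : the ideal of S generated by M (finite sums of m * s, m in M, s in S). *)
Definition ext_ideal (M : S -> Prop) (t : S) : Prop :=
  exists l : seq (S * S), (forall e, e \in l -> M e.1) /\
    t = \sum_(e <- l) e.1 * e.2.

Definition sum_R_ext (R M : S -> Prop) (t : S) : Prop :=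
  exists r u, R r /\ ext_ideal M u /\ t = r + u.

(* Tensor product S (x)_R S as the free Z-module on S * S modulo the
   bilinearity and R-balancing relations.  A formal sum is a list of
   (integer coefficient, generator) pairs; fcoef computes its coefficient. *)
Definition fcoef (l : seq (int * (S * S))) (p : S * S) : int :=
  \sum_(e <- l) (if e.2 == p then e.1 else 0).

Inductive tensor_rel (R : S -> Prop) : seq (int * (S * S)) -> Prop :=
| tensor_rel_addl x x' y :
    tensor_rel R [:: ((1 : int), (x + x', y)); ((-1 : int), (x, y)); ((-1 : int), (x', y))]
| tensor_rel_addr x y y' :
    tensor_rel R [:: ((1 : int), (x, y + y')); ((-1 : int), (x, y)); ((-1 : int), (x, y'))]
| tensor_rel_bal r x y : R r ->
    tensor_rel R [:: ((1 : int), (r * x, y)); ((-1 : int), (x, r * y))].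

(* a and b represent the same element of S (x)_R S: a - b lies in the
   Z-span of the relations. *)
Definition tensor_eq (R : S -> Prop) (a b : seq (int * (S * S))) : Prop :=
  exists gs : seq (int * seq (int * (S * S))),
    (forall g, g \in gs -> tensor_rel R g.2) /\
    forall p, fcoef a p - fcoef b p = \sum_(g <- gs) g.1 * fcoef g.2 p.

Definition tmul (x y : S) : seq (int * (S * S)) := [:: ((1 : int), (x, y))].

Definition strict_closure (R : S -> Prop) (a : S) : Prop :=
  tensor_eq R (tmul a 1) (tmul 1 a).
End Defs.

(* Main.v *)
Require Import Defs.
From mathcomp Require Import all_boot all_order all_algebra.
From mathcomp Require Import ring.
From Stdlib Require Import Classical ClassicalEpsilon.
Set Implicit Arguments. Unset Strict Implicit. Unset Printing Implicit Defensive.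
Import GRing.Theory.
Local Open Scope ring_scope.

Lemma R0 (S : comPzRingType) (R : S -> Prop) (hR : is_subring R) : R 0.
Proof. have := subringB hR (subring1 hR) (subring1 hR). by rewrite subrr. Qed.
Lemma RN (S : comPzRingType) (R : S -> Prop) (hR : is_subring R) x : R x -> R (- x).
Proof. move=> h; have := subringB hR (R0 hR) h. by rewrite sub0r. Qed.
Lemma RD (S : comPzRingType) (R : S -> Prop) (hR : is_subring R) x y : R x -> R y -> R (x + y).
Proof. move=> h1 h2; have := subringB hR h1 (RN hR h2). by rewrite opprK. Qed.

Lemma MB (S : comPzRingType) (R M : S -> Prop) (hI : is_ideal_of R M) x y :
  M x -> M y -> M (x - y).
Proof. move=> h1 h2; apply: (idealD hI) h1 _; exact: (idealN hI). Qed.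
Lemma Meq (S : comPzRingType) (M : S -> Prop) x y : M x -> x = y -> M y.
Proof. by move=> h <-. Qed.

Lemma ext0 (S : comPzRingType) (M : S -> Prop) : ext_ideal M 0.
Proof. exists [::]; split => //; by rewrite big_nil. Qed.
Lemma extD (S : comPzRingType) (M : S -> Prop) x y :
  ext_ideal M x -> ext_ideal M y -> ext_ideal M (x + y).
Proof.
move=> [l1 [h1 ->]] [l2 [h2 ->]]; exists (l1 ++ l2); split; last by rewrite big_cat.
by move=> e; rewrite mem_cat => /orP [] ?; [apply: h1|apply: h2].
Qed.
Lemma extMl (S : comPzRingType) (M : S -> Prop) t x :
  ext_ideal M x -> ext_ideal M (t * x).
Proof.
move=> [l [h ->]]; exists [seq (e.1, t * e.2) | e <- l]; split.
  by move=> e /mapP [e' He' ->] /=; apply: h.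
rewrite big_map mulr_sumr; apply: eq_bigr => e _ /=; ring.
Qed.
Lemma extR (S : comPzRingType) (M : S -> Prop) m s : M m -> ext_ideal M (m * s).
Proof. move=> h; exists [:: (m, s)]; split; last by rewrite big_seq1.
by move=> e; rewrite inE => /eqP ->. Qed.
Lemma extN (S : comPzRingType) (M : S -> Prop) x : ext_ideal M x -> ext_ideal M (- x).
Proof. move=> h; have := extMl (-1) h; by rewrite mulN1r. Qed.

Fixpoint Wsp (S : comPzRingType) (R M : S -> Prop) (L : seq S) : S -> Prop :=
  match L with
  | [::] => ext_ideal M
  | s :: L' => fun x => exists r w, R r /\ Wsp R M L' w /\ x = w + r * s
  end.

Section W.
Lemma WMS (S : comPzRingType) (R M : S -> Prop) (hR : is_subring R) L x :
  ext_ideal M x -> Wsp R M L x.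
Proof.
elim: L x => [|s L IH] x h //=; exists 0, x; split; [exact: R0|split; [exact: IH|ring]].
Qed.
Lemma WD (S : comPzRingType) (R M : S -> Prop) (hR : is_subring R) L x y :
  Wsp R M L x -> Wsp R M L y -> Wsp R M L (x + y).
Proof.
elim: L x y => [|s L IH] x y /=; first exact: extD.
move=> [r [w [hr [hw ->]]]] [r' [w' [hr' [hw' ->]]]].
exists (r + r'), (w + w'); split; [exact: RD|split; [exact: IH|ring]].
Qed.
Lemma WM (S : comPzRingType) (R M : S -> Prop) (hR : is_subring R) L t x :
  R t -> Wsp R M L x -> Wsp R M L (t * x).
Proof.
move=> ht; elim: L x => [|s L IH] x /=; first exact: extMl.
move=> [r [w [hr [hw ->]]]].
exists (t * r), (t * w); split; [exact: (subringM hR)|split; [exact: IH|ring]].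
Qed.
Lemma WN (S : comPzRingType) (R M : S -> Prop) (hR : is_subring R) L x :
  Wsp R M L x -> Wsp R M L (- x).
Proof. move=> h; have := WM hR (RN hR (subring1 hR)) h; by rewrite mulN1r. Qed.
Lemma WB (S : comPzRingType) (R M : S -> Prop) (hR : is_subring R) L x y :
  Wsp R M L x -> Wsp R M L y -> Wsp R M L (x - y).
Proof. move=> h1 h2; apply: WD => //; exact: WN. Qed.
Lemma Wmem (S : comPzRingType) (R M : S -> Prop) (hR : is_subring R) L x :
  x \in L -> Wsp R M L x.
Proof.
elim: L => [|s L IH] //=; rewrite inE => /orP [/eqP ->|hx].
  exists 1, 0; split; [exact: subring1|split; [apply: WMS => //; exact: ext0|ring]].
exists 0, x; split; [exact: R0|split; [exact: IH|ring]].
Qed.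
Lemma Wsub (S : comPzRingType) (R M : S -> Prop) (hR : is_subring R) L s x :
  Wsp R M L s -> Wsp R M (s :: L) x -> Wsp R M L x.
Proof. move=> hs [r [w [hr [hw ->]]]]; apply: WD => //; exact: WM. Qed.
End W.

Lemma inv_mod (S : comPzRingType) (R M : S -> Prop) (hR : is_subring R)
  (hM : is_maximal_ideal_of R M) r :
  R r -> ~ M r -> exists u m, R u /\ M m /\ 1 = m + u * r.
Proof.
move=> hr hnr; case: hM => hI _ hmax.
pose J x := exists m u, M m /\ R u /\ x = m + u * r.
have hJ : is_ideal_of R J.
  split.
  - move=> x [m [u [hm [hu ->]]]]; apply: RD => //; first exact: (ideal_sub hI).
    exact: (subringM hR).
  - exists 0, 0; split; [exact: (ideal0 hI)|split; [exact: R0|ring]].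
  - move=> x y [m [u [hm [hu ->]]]] [m' [u' [hm' [hu' ->]]]].
    exists (m + m'), (u + u'); split; [exact: (idealD hI)|split; [exact: RD|ring]].
  - move=> x [m [u [hm [hu ->]]]].
    exists (- m), (- u); split; [exact: (idealN hI)|split; [exact: RN|ring]].
  - move=> t x ht [m [u [hm [hu ->]]]].
    exists (t * m), (t * u); split; [exact: (idealMl hI)|split; [exact: (subringM hR)|ring]].
have hMJ : forall x, M x -> J x.
  move=> x hx; exists x, 0; split => //; split; [exact: R0|ring].
case: (hmax J hJ hMJ) => [hJM|[m [u [hm [hu e]]]]].
  exfalso; apply: hnr; apply: hJM; exists 0, 1; split; [exact: (ideal0 hI)|split; [exact: (subring1 hR)|ring]].
by exists u, m.
Qed.

Lemma core (S : comPzRingType) (R M : S -> Prop) (hR : is_subring R)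
  (hM : is_maximal_ideal_of R M) L s r :
  ~ Wsp R M L s -> R r -> Wsp R M L (r * s) -> M r.
Proof.
move=> hs hr hrs; case: (classic (M r)) => // hnr; exfalso; apply: hs.
have [u [m [hu [hm e]]]] := inv_mod hR hM hr hnr.
have -> : s = m * s + u * (r * s) by rewrite mulrA -mulrDl -e mul1r.
apply: WD => //; [apply: WMS => //; exact: extR|exact: WM].
Qed.

Definition Good (S : comPzRingType) (R M : S -> Prop) L (phi : S -> S) :=
  [/\ (forall x y, Wsp R M L x -> Wsp R M L y -> M (phi (x + y) - phi x - phi y)),
      (forall r x, R r -> Wsp R M L x -> M (phi (r * x) - r * phi x)),
      (forall x, ext_ideal M x -> M (phi x)) &
      (forall x, R (phi x))].

Definition extf (S : comPzRingType) (R M : S -> Prop) L (phi : S -> S) (s c x : S) : S :=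
  match excluded_middle_informative
          (exists p : S * S, R p.1 /\ Wsp R M L p.2 /\ x = p.2 + p.1 * s) with
  | left H => let p := proj1_sig (constructive_indefinite_description _ H) in
              phi p.2 + p.1 * c
  | right _ => 0
  end.

Lemma extf_spec (S : comPzRingType) (R M : S -> Prop) L phi s c x :
  Wsp R M (s :: L) x -> exists r w, [/\ R r, Wsp R M L w, x = w + r * s &
    extf R M L phi s c x = phi w + r * c].
Proof.
move=> [r [w [hr [hw e]]]]; rewrite /extf.
case: excluded_middle_informative => [H|H]; last first.
  by exfalso; apply: H; exists (r, w).
case: (constructive_indefinite_description _ H) => [[r1 w1] [h1 [h2 h3]]] /=.
by exists r1, w1.
Qed.

Lemma extf_R (S : comPzRingType) (R M : S -> Prop) (hR : is_subring R) L phi s c x :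
  (forall y, R (phi y)) -> R c -> R (extf R M L phi s c x).
Proof.
move=> hphi hc; rewrite /extf; case: excluded_middle_informative => [H|H]; last exact: R0.
case: (constructive_indefinite_description _ H) => [[r1 w1] [h1 [h2 h3]]] /=.
apply: RD => //; exact: (subringM hR).
Qed.

Lemma Kext (S : comPzRingType) (R M : S -> Prop) (hR : is_subring R)
  (hM : is_maximal_ideal_of R M) L phi s c w r :
  Good R M L phi -> ~ Wsp R M L s -> R c -> Wsp R M L w -> R r ->
  M (extf R M L phi s c (w + r * s) - (phi w + r * c)).
Proof.
move=> [g1 g2 g3 g4] hs hc hw hr; have hI := (let: And3 h _ _ := hM in h).
have [r1 [w1 [hr1 hw1 e ->]]] := @extf_spec S R M L phi s c (w + r * s)
  (ex_intro _ r (ex_intro _ w (conj hr (conj hw erefl)))).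
have e2 : (r - r1) * s = w1 - w.
  have -> : (r - r1) * s = (w + r * s) - w - r1 * s by ring.
  rewrite e; ring.
have hrr : M (r - r1).
  apply: (core hR hM hs); first by apply: (subringB hR).
  rewrite e2; exact: WB.
have hd : ext_ideal M (w - w1).
  have -> : w - w1 = (r1 - r) * s by rewrite -[r1 - r]opprB mulNr e2 opprB.
  apply: extR; apply: (Meq (idealN hI hrr)); ring.
have h1 := g1 _ _ hw1 (WB hR hw hw1).
have eq_tmp : w1 + (w - w1) = w by ring. rewrite eq_tmp in h1; clear eq_tmp.
have h2 := g3 _ hd.
have h3 : M (c * (r1 - r)).
  apply: (idealMl hI) => //; apply: (Meq (idealN hI hrr)); ring.
have h4 := idealD hI (idealD hI (idealN hI h1) (idealN hI h2)) h3.
apply: (Meq h4); ring.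
Qed.

Lemma Good_ext (S : comPzRingType) (R M : S -> Prop) (hR : is_subring R)
  (hM : is_maximal_ideal_of R M) L phi s c :
  Good R M L phi -> ~ Wsp R M L s -> R c -> Good R M (s :: L) (extf R M L phi s c).
Proof.
move=> hG hs hc; have hG' := hG; case: hG' => g1 g2 g3 g4.
have hI := (let: And3 h _ _ := hM in h).
split.
- move=> x y [r [w [hr [hw ->]]]] [r' [w' [hr' [hw' ->]]]].
  have k1 := Kext hR hM hG hs hc hw hr.
  have k2 := Kext hR hM hG hs hc hw' hr'.
  have k3 := Kext hR hM hG hs hc (WD hR hw hw') (RD hR hr hr').
  have eq_tmp : (w + w') + (r + r') * s = w + r * s + (w' + r' * s) by ring. rewrite eq_tmp in k3; clear eq_tmp.
  have h := g1 _ _ hw hw'.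
  have h5 := idealD hI (idealD hI (MB hI k3 k1) (idealN hI k2)) h.
  apply: (Meq h5); ring.
- move=> t x ht [r [w [hr [hw ->]]]].
  have k1 := Kext hR hM hG hs hc hw hr.
  have k2 := Kext hR hM hG hs hc (WM hR ht hw) (subringM hR ht hr).
  have eq_tmp : t * w + t * r * s = t * (w + r * s) by ring. rewrite eq_tmp in k2; clear eq_tmp.
  have h := g2 _ _ ht hw.
  have h5 := idealD hI (MB hI k2 (idealMl hI ht k1)) h.
  apply: (Meq h5); ring.
- move=> x hx.
  have k1 := Kext hR hM hG hs hc (WMS hR L hx) (R0 hR).
  have eq_tmp : x + 0 * s = x by ring. rewrite eq_tmp in k1; clear eq_tmp.
  have h5 := idealD hI k1 (g3 _ hx).
  apply: (Meq h5); ring.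
- move=> x; exact: extf_R.
Qed.

Lemma Good_sub (S : comPzRingType) (R M : S -> Prop) (hR : is_subring R) L phi s :
  Wsp R M L s -> Good R M L phi -> Good R M (s :: L) phi.
Proof.
move=> hs [g1 g2 g3 g4]; split => //.
- move=> x y hx hy; apply: g1; exact: (Wsub hR hs).
- move=> r x hr hx; apply: g2 => //; exact: (Wsub hR hs).
Qed.

Lemma build (S : comPzRingType) (R M : S -> Prop) (hR : is_subring R)
  (hM : is_maximal_ideal_of R M) L :
  ~ ext_ideal M 1 -> exists phi, Good R M (L ++ [:: 1]) phi /\ M (phi 1 - 1).
Proof.
move=> h1; have hI := (let: And3 h _ _ := hM in h).
elim: L => [|s L [phi [hG hphi]]] /=.
  have hG0 : Good R M [::] (fun _ => 0).
    split => *; rewrite ?subrr ?mulr0 ?subr0; solve [exact: (ideal0 hI)|exact: R0].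
  exists (extf R M [::] (fun _ => 0) 1 1); split.
    apply: Good_ext => //; exact: subring1.
  have k := Kext hR hM hG0 h1 (subring1 hR) (ext0 M) (subring1 hR).
  have eq_tmp : 0 + 1 * 1 = 1 :> S by ring. rewrite eq_tmp in k; clear eq_tmp.
  apply: (Meq k) => /=; ring.
case: (classic (Wsp R M (L ++ [:: 1]) s)) => hs.
  exists phi; split => //; exact: Good_sub.
exists (extf R M (L ++ [:: 1]) phi s 0); split.
  apply: Good_ext => //; exact: R0.
have w1 : Wsp R M (L ++ [:: 1]) 1 by apply: Wmem => //; rewrite mem_cat mem_seq1 eqxx orbT.
have k := Kext hR hM hG hs (R0 hR) w1 (R0 hR).
have eq_tmp : 1 + 0 * s = 1 :> S by ring. rewrite eq_tmp in k; clear eq_tmp.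
have h5 := idealD hI k hphi.
apply: (Meq h5); ring.
Qed.

Definition Bsum (S : comPzRingType) (F : S * S -> S) (l : seq (int * (S * S))) : S :=
  \sum_(e <- l) F e.2 *~ e.1.

Lemma supp (S : comPzRingType) (F : S * S -> S) (l : seq (int * (S * S))) (P : seq (S * S)) :
  uniq P -> {subset map snd l <= P} ->
  Bsum F l = \sum_(p <- P) F p *~ fcoef l p.
Proof.
move=> uP; elim: l => [|e l IH] hsub.
  rewrite /Bsum big_nil; apply/esym/big1 => p _; by rewrite /fcoef big_nil mulr0z.
have hl : {subset map snd l <= P} by move=> x hx; apply: hsub; rewrite /= inE hx orbT.
have he : e.2 \in P by apply: hsub; rewrite /= inE eqxx.
rewrite /Bsum big_cons -/(Bsum F l) (IH hl).
rewrite /fcoef.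
under [in RHS]eq_bigr => p _ do rewrite big_cons mulrzDr.
rewrite big_split /=; congr (_ + _).
rewrite (bigD1_seq e.2) //= eqxx big1 ?addr0 // => p hp.
by rewrite eq_sym (negbTE hp) mulr0z.
Qed.

Lemma ident (S : comPzRingType) (F : S * S -> S) (a b : seq (int * (S * S)))
  (gs : seq (int * seq (int * (S * S)))) :
  (forall p, fcoef a p - fcoef b p = \sum_(g <- gs) g.1 * fcoef g.2 p) ->
  Bsum F a - Bsum F b = \sum_(g <- gs) Bsum F g.2 *~ g.1.
Proof.
move=> hc.
pose P := undup (map snd (a ++ b ++ flatten (map snd gs))).
have uP : uniq P by exact: undup_uniq.
have hsub : forall l, {subset l <= a ++ b ++ flatten (map snd gs)} -> {subset map snd l <= P}.
  move=> l hl x /mapP [e he ->]; rewrite mem_undup; apply: map_f; exact: hl.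
rewrite (supp F uP (hsub a _)); last by move=> e he; rewrite mem_cat he.
rewrite (supp F uP (hsub b _)); last by move=> e he; rewrite !mem_cat he orbT.
rewrite -sumrB.
under eq_bigr => p _ do rewrite -mulrzBr hc mulrz_sumr.
rewrite exchange_big /=.
apply: eq_big_seq => g hg.
rewrite (supp F uP (hsub g.2 _)); last first.
  move=> e he; rewrite !mem_cat; apply/orP; right; apply/orP; right.
  apply/flattenP; exists g.2 => //; exact: map_f.
rewrite mulrz_suml; apply: eq_bigr => p _.
by rewrite -mulrzA [g.1 * _]mulrC.
Qed.

Lemma TD (S : comPzRingType) (R M : S -> Prop) (hR : is_subring R) x y :
  sum_R_ext R M x -> sum_R_ext R M y -> sum_R_ext R M (x + y).
Proof.
move=> [r [u [hr [hu ->]]]] [r' [u' [hr' [hu' ->]]]].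
exists (r + r'), (u + u'); split; [exact: RD|split; [exact: extD|ring]].
Qed.
Lemma TN (S : comPzRingType) (R M : S -> Prop) (hR : is_subring R) x :
  sum_R_ext R M x -> sum_R_ext R M (- x).
Proof.
move=> [r [u [hr [hu ->]]]].
exists (- r), (- u); split; [exact: RN|split; [exact: extN|ring]].
Qed.
Lemma TR (S : comPzRingType) (R M : S -> Prop) (hR : is_subring R) x :
  R x -> sum_R_ext R M x.
Proof. move=> h; exists x, 0; split => //; split; [exact: ext0|ring]. Qed.
Lemma TE (S : comPzRingType) (R M : S -> Prop) (hR : is_subring R) x :
  ext_ideal M x -> sum_R_ext R M x.
Proof. move=> h; exists 0, x; split; [exact: R0|split => //; ring]. Qed.
Lemma Tnat (S : comPzRingType) (R M : S -> Prop) (hR : is_subring R) x k :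
  sum_R_ext R M x -> sum_R_ext R M (x *+ k).
Proof.
move=> h; elim: k => [|k IH]; first by rewrite mulr0n; exact: (TR _ hR (R0 hR)).
rewrite mulrS; exact: TD.
Qed.
Lemma TZ (S : comPzRingType) (R M : S -> Prop) (hR : is_subring R) x n :
  sum_R_ext R M x -> sum_R_ext R M (x *~ n).
Proof.
move=> h; case: n => k; first exact: Tnat.
rewrite NegzE mulrNz; apply: TN => //; exact: Tnat.
Qed.

Lemma Peq (S : Type) (P : S -> Prop) x y : P x -> x = y -> P y.
Proof. by move=> h <-. Qed.

Theorem proposition2p2 (S : comPzRingType) (R : S -> Prop) (hR : is_subring R)
  (M : S -> Prop) (hM : is_maximal_ideal_of R M) (a : S) :
  strict_closure R a -> sum_R_ext R M a.
Proof.
move=> [gs [hrel hc]]; have hI := (let: And3 h _ _ := hM in h).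
case: (classic (ext_ideal M 1)) => h1.
  exists 0, a; split; [exact: R0|split; last by ring].
  have := extMl a h1; by rewrite mulr1.
pose L := a :: flatten [seq [seq e.2.1 | e <- g.2] | g <- gs].
have [phi [[g1 g2 g3 g4] hphi]] := build hR hM L h1.
pose F (p : S * S) := phi p.1 * p.2.
have hW : forall x, x \in L -> Wsp R M (L ++ [:: 1]) x.
  by move=> x hx; apply: Wmem => //; rewrite mem_cat hx.
have hrelT : forall l, tensor_rel R l -> (forall e, e \in l -> e.2.1 \in L) ->
    sum_R_ext R M (Bsum F l).
  move=> l hr; case: hr => [x x' y|x y y'|r x y hr] hm;
    rewrite /Bsum !big_cons big_nil /= !mulr1z !mulrN1z /F /=.
  - have hx : Wsp R M (L ++ [:: 1]) x by apply: hW; apply: (hm (-1, (x, y))); rewrite !inE eqxx orbT.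
    have hx' : Wsp R M (L ++ [:: 1]) x' by apply: hW; apply: (hm (-1, (x', y))); rewrite !inE eqxx !orbT.
    apply: (TE hR); apply: (Peq (extR y (g1 _ _ hx hx'))); ring.
  - apply: TR => //; have -> : phi x * (y + y') + (- (phi x * y) + (- (phi x * y') + 0)) = 0 by ring.
    exact: R0.
  - have hx : Wsp R M (L ++ [:: 1]) x by apply: hW; apply: (hm (-1, (x, r * y))); rewrite !inE eqxx orbT.
    apply: (TE hR); apply: (Peq (extR y (g2 _ _ hr hx))); ring.
have hsum : forall gs', {subset gs' <= gs} ->
    sum_R_ext R M (\sum_(g <- gs') Bsum F g.2 *~ g.1).
  elim => [|g gs' IH] hsub.
    rewrite big_nil; exact: (TR _ hR (R0 hR)).
  have hg : g \in gs by apply: hsub; rewrite inE eqxx.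
  rewrite big_cons; apply: TD => //; last by apply: IH => g' hg'; apply: hsub; rewrite inE hg' orbT.
  apply: TZ => //; apply: hrelT; first exact: hrel.
  move=> e he; rewrite inE; apply/orP; right; apply/flattenP.
  exists [seq e.2.1 | e <- g.2]; [exact: (map_f _ hg)|exact: (map_f _ he)].
have := hsum gs (fun x h => h).
rewrite -(ident F hc) /Bsum !big_cons !big_nil /= !mulr1z /F /= => hT.
have eq1 : a = phi a + (- (phi a * 1 + 0 - (phi 1 * a + 0))) + (- ((phi 1 - 1) * a)) by ring.
rewrite eq1; apply: TD => //; first apply: TD => //.
- exact: (TR _ hR (g4 a)).
- exact: TN.
- apply: TN => //; apply: TE => //; exact: extR.
Qed.
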